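(* Let $n\ge 1$ be an integer, let $C_t$ be a Liu process, and let $f,g:[0,\infty)\times\mathbb{R}^{n}\to\mathbb{R}$ be continuous functions. Let $X_t$ be a solution of the $n$-th order uncertain differential equation $$X_t^{(n)}=f\big(t,X_t,X_t^{(1)},\dots,X_t^{(n-1)}\big)+g\big(t,X_t,X_t^{(1)},\dots,X_t^{(n-1)}\big)\dot{C}_t$$ with initial conditions $X^{(k)}_0=X_0^{k}$ for $k=0,1,\dots,n-1$ (where $X_0^k$ are given real numbers). Then for every $t\ge 0$, $$X_t=\sum_{k=0}^{n-1}\frac{t^k}{k!}X_0^{k}+\frac{1}{(n-1)!}\int_{0}^{t}(t-s)^{n-1}f\big(s,X_s,X_s^{(1)},\dots,X_s^{(n-1)}\big)\,{\rm d}s+\frac{1}{(n-1)!}\int_{0}^{t}(t-s)^{n-1}g\big(s,X_s,X_s^{(1)},\dots,X_s^{(n-1)}\big)\,{\rm d}C_s,$$ where the last integral is a Liu integral.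
   Context: An uncertainty space is a triple $(\Gamma,\mathcal{L},\mathcal{M})$ where $\Gamma$ is a nonempty set, $\mathcal{L}$ a $\sigma$-algebra on $\Gamma$ and $\mathcal{M}$ an uncertain measure (in the sense of Liu's uncertainty theory). A Liu process $C_t$ is an uncertain process with $C_0=0$, almost all sample paths Lipschitz continuous, stationary and independent increments, and each increment $C_{s+t}-C_s$ a normal uncertain variable with expected value $0$ and variance $t^2$. For an uncertain process $Z_t$, the Liu integral is $\int_0^a Z_t\,{\rm d}C_t=\lim_{\Delta\to0}\sum_{i=1}^k Z_{t_i}(C_{t_{i+1}}-C_{t_i})$ over partitions $0=t_1<\dots<t_{k+1}=a$ with mesh $\Delta=\max_i|t_{i+1}-t_i|$, provided the limit exists almost surely and is finite. $\dot C_t$ denotes the formal derivative ${\rm d}C_t/{\rm d}t$. An uncertain process $X_t$ is called a solution of the $n$-th order uncertain differential equation above with initial values $X_0^k$ (the value of the $k$-th derivative at $0$, $X_0^0=X_0$) if it satisfies the uncertain integral equation $$X_t=\sum_{i=0}^{n-1}\frac{t^i}{i!}X_0^{i}+\int_0^t\int_0^{t_1}\!\!\cdots\int_0^{t_{n-1}} f\big(t_n,X_{t_n},\dots,X^{(n-1)}_{t_n}\big)\,{\rm d}t_n\,{\rm d}t_{n-1}\cdots{\rm d}t_1+\int_0^t\int_0^{t_1}\!\!\cdots\int_0^{t_{n-1}} g\big(t_n,X_{t_n},\dots,X^{(n-1)}_{t_n}\big)\,{\rm d}C_{t_n}\,{\rm d}t_{n-1}\cdots{\rm d}t_1$$ for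 all $t\ge0$, where $X^{(k)}$ denotes the $k$-th derivative in $t$. *)

(* Defs.v *)
From Stdlib Require Import Reals Lra Factorial.
From Coquelicot Require Import Coquelicot.
Open Scope R_scope.

Fixpoint psum (a : nat -> R) (k : nat) : R :=
  match k with
  | O => 0
  | S k' => psum a k' + a k'
  end.

Definition is_sigma_algebra {T : Type} (S : (T -> Prop) -> Prop) : Prop :=
  S (fun _ => True) /\
  (forall A, S A -> S (fun x => ~ A x)) /\
  (forall A : nat -> T -> Prop, (forall i, S (A i)) -> S (fun x => exists i, A i x)).

Definition borel (B : R -> Prop) : Prop :=
  forall S : (R -> Prop) -> Prop, is_sigma_algebra S ->
    (forall a, S (fun x => x <= a)) -> S B.

Definition uncertainty_space {Gamma : Type}
  (L : (Gamma -> Prop) -> Prop) (M : (Gamma -> Prop) -> R) : Prop :=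
  is_sigma_algebra L /\
  M (fun _ => True) = 1 /\
  (forall A, L A -> M A + M (fun x => ~ A x) = 1) /\
  (forall A : nat -> Gamma -> Prop, (forall i, L (A i)) ->
     forall s, is_series (fun i => M (A i)) s ->
       M (fun x => exists i, A i x) <= s).

Definition uncertain_variable {Gamma : Type}
  (L : (Gamma -> Prop) -> Prop) (xi : Gamma -> R) : Prop :=
  forall B, borel B -> L (fun g => B (xi g)).

Definition uncertain_process {Gamma : Type}
  (L : (Gamma -> Prop) -> Prop) (X : R -> Gamma -> R) : Prop :=
  forall t, 0 <= t -> uncertain_variable L (X t).

(* independence of the uncertain variables xi 0, ..., xi (m-1):
   M( /\_i {xi_i in B_i} ) = min_i M{xi_i in B_i} for all Borel B_i *)
Definition independent {Gamma : Type}
  (L : (Gamma -> Prop) -> Prop) (M : (Gamma -> Prop) -> R)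
  (m : nat) (xi : nat -> Gamma -> R) : Prop :=
  (forall i, (i < m)%nat -> uncertain_variable L (xi i)) /\
  forall B : nat -> R -> Prop, (forall i, (i < m)%nat -> borel (B i)) ->
    let A := fun g => forall i, (i < m)%nat -> B i (xi i g) in
    (forall i, (i < m)%nat -> M A <= M (fun g => B i (xi i g))) /\
    (exists i, (i < m)%nat /\ M A = M (fun g => B i (xi i g))).

Definition normal_distr (e sigma x : R) : R :=
  / (1 + exp (PI * (e - x) / (sqrt 3 * sigma))).

Definition liu_process {Gamma : Type}
  (L : (Gamma -> Prop) -> Prop) (M : (Gamma -> Prop) -> R)
  (C : R -> Gamma -> R) : Prop :=
  (forall g, C 0 g = 0) /\
  uncertain_process L C /\
  (exists Lam, L Lam /\ M Lam = 1 /\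
     forall g, Lam g -> exists K, forall s t, 0 <= s -> 0 <= t ->
       Rabs (C t g - C s g) <= K * Rabs (t - s)) /\
  (forall s t x, 0 <= s -> 0 <= t ->
     M (fun g => C (s + t) g - C s g <= x) = M (fun g => C t g - C 0 g <= x)) /\
  (forall (m : nat) (p : nat -> R), (1 <= m)%nat -> 0 <= p 0%nat ->
     (forall i, (i < m)%nat -> p i < p (S i)) ->
     independent L M m (fun i g => C (p (S i)) g - C (p i) g)) /\
  (forall s t x, 0 <= s -> 0 < t ->
     M (fun g => C (s + t) g - C s g <= x) = normal_distr 0 t x).

Definition is_Liu_int (Z c : R -> R) (a v : R) : Prop :=
  (a = 0 /\ v = 0) \/
  (0 < a /\
   forall eps, 0 < eps -> exists delta, 0 < delta /\
     forall (k : nat) (p : nat -> R),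
       (1 <= k)%nat -> p 0%nat = 0 -> p k = a ->
       (forall i, (i < k)%nat -> p i < p (S i)) ->
       (forall i, (i < k)%nat -> p (S i) - p i < delta) ->
       Rabs (psum (fun i => Z (p i) * (c (p (S i)) - c (p i))) k - v) < eps).

(* iterated integral: iter_int P m t v  means
   v = int_0^t int_0^{t_1} ... int_0^{t_{m-1}} (P-value at t_m) dt_m ... dt_1,
   where P s w says "the innermost integral up to s has value w". *)
Fixpoint iter_int (P : R -> R -> Prop) (m : nat) (t v : R) : Prop :=
  match m with
  | O => P t v
  | S m' => exists G : R -> R,
      (forall s, 0 <= s <= t -> iter_int P m' s (G s)) /\ is_RInt G 0 t v
  end.

(* A function of (t, x_0, ..., x_{n-1}) is encoded as f : R -> (nat -> R) -> R
   depending only on the first n coordinates. *)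
Definition depends_on_first (n : nat) (f : R -> (nat -> R) -> R) : Prop :=
  forall t x y, (forall i, (i < n)%nat -> x i = y i) -> f t x = f t y.

Definition continuous_on_Rn (n : nat) (f : R -> (nat -> R) -> R) : Prop :=
  forall t x, 0 <= t -> forall eps, 0 < eps -> exists delta, 0 < delta /\
    forall t' y, 0 <= t' -> Rabs (t' - t) < delta ->
      (forall i, (i < n)%nat -> Rabs (y i - x i) < delta) ->
      Rabs (f t' y - f t x) < eps.

(* right-sided-at-0 derivative on [0,oo) *)
Definition has_deriv_nonneg (F : R -> R) (t l : R) : Prop :=
  forall eps, 0 < eps -> exists delta, 0 < delta /\
    forall h, h <> 0 -> 0 <= t + h -> Rabs h < delta ->
      Rabs ((F (t + h) - F t) / h - l) < eps.

(* D k t g is the k-th derivative X^{(k)}_t (sample path g), D 0 = X. *)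
Definition is_solution {Gamma : Type}
  (L : (Gamma -> Prop) -> Prop) (M : (Gamma -> Prop) -> R) (n : nat)
  (f g : R -> (nat -> R) -> R) (C : R -> Gamma -> R) (X0 : nat -> R)
  (X : R -> Gamma -> R) (D : nat -> R -> Gamma -> R) : Prop :=
  uncertain_process L X /\
  D 0%nat = X /\
  exists Lam, L Lam /\ M Lam = 1 /\
    forall w, Lam w ->
      (forall k, (k + 1 < n)%nat -> forall t, 0 <= t ->
         has_deriv_nonneg (fun s => D k s w) t (D (S k) t w)) /\
      (forall k, (k < n)%nat -> D k 0 w = X0 k) /\
      (forall t, 0 <= t -> exists vf vg,
         iter_int (fun s v => is_RInt (fun r => f r (fun k => D k r w)) 0 s v)
                  (n - 1) t vf /\
         iter_int (fun s v => is_Liu_int (fun r => g r (fun k => D k r w))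
                                         (fun r => C r w) s v)
                  (n - 1) t vg /\
         X t w = psum (fun i => t ^ i / INR (fact i) * X0 i) n + vf + vg).

(* Main.v *)
Require Import Defs.
From Stdlib Require Import Reals Factorial Lra Lia ZArith ClassicalEpsilon FunctionalExtensionality.
From Coquelicot Require Import Coquelicot.
Open Scope R_scope.

Lemma psum_ext (a b : nat -> R) k : (forall i, (i < k)%nat -> a i = b i) -> psum a k = psum b k.
Proof. induction k; simpl; intros H; [reflexivity|]. rewrite IHk by (intros; apply H; lia). rewrite H by lia. reflexivity. Qed.

Lemma psum_plus (a b : nat -> R) k : psum (fun i => a i + b i) k = psum a k + psum b k.
Proof. induction k; simpl; [lra|]. rewrite IHk. lra. Qed.

Lemma psum_minus (a b : nat -> R) k : psum (fun i => a i - b i) k = psum a k - psum b k.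
Proof. induction k; simpl; [lra|]. rewrite IHk. lra. Qed.

Lemma psum_scal (a : nat -> R) c k : psum (fun i => c * a i) k = c * psum a k.
Proof. induction k; simpl; [lra|]. rewrite IHk. lra. Qed.

Lemma psum_shift (a : nat -> R) k1 k2 : psum a (k1 + k2) = psum a k1 + psum (fun i => a (k1 + i)%nat) k2.
Proof. induction k2; simpl. rewrite Nat.add_0_r; lra. rewrite Nat.add_succ_r. simpl. rewrite IHk2. lra. Qed.

Lemma psum_shift1 (a : nat -> R) k : psum a (S k) = a O + psum (fun i => a (S i)) k.
Proof. replace (S k) with (1 + k)%nat by lia. rewrite psum_shift. simpl. lra. Qed.

Lemma psum_abs (a : nat -> R) k : Rabs (psum a k) <= psum (fun i => Rabs (a i)) k.
Proof. induction k; simpl. rewrite Rabs_R0; lra. eapply Rle_trans. apply Rabs_triang. lra. Qed.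

Lemma psum_le (a b : nat -> R) k : (forall i, (i < k)%nat -> a i <= b i) -> psum a k <= psum b k.
Proof. induction k; simpl; intros H; [lra|]. assert (a k <= b k) by (apply H; lia). assert (psum a k <= psum b k) by (apply IHk; intros; apply H; lia). lra. Qed.

Lemma psum_tele (p : nat -> R) k : psum (fun i => p (S i) - p i) k = p k - p O.
Proof. induction k; simpl; [lra|]. rewrite IHk. lra. Qed.

Lemma psum_const0 k : psum (fun _ => 0) k = 0.
Proof. induction k; simpl; lra. Qed.

Lemma abel (h a : nat -> R) k :
  psum (fun i => h i * a i) k = h k * psum a k - psum (fun i => (h (S i) - h i) * psum a (S i)) k.
Proof. induction k; simpl. lra. rewrite IHk. simpl. ring. Qed.

Definition part (a b : R) (k : nat) (p : nat -> R) (d : R) : Prop :=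
  (1 <= k)%nat /\ p O = a /\ p k = b /\ (forall i, (i < k)%nat -> p i < p (S i)) /\
  (forall i, (i < k)%nat -> p (S i) - p i < d).

Lemma part_exists a b d : a < b -> 0 < d -> exists k p, part a b k p d.
Proof.
  intros Hab Hd.
  destruct (nfloor_ex ((b - a) / d)) as [N HN].
  { apply Rlt_le, Rdiv_lt_0_compat; lra. }
  exists (S N), (fun i => a + INR i * ((b - a) / INR (S N))).
  assert (HS : 0 < INR (S N)) by (apply lt_0_INR; lia).
  assert (Hq : 0 < (b - a) / INR (S N)) by (apply Rdiv_lt_0_compat; lra).
  repeat split.
  - lia.
  - simpl; lra.
  - field. lra.
  - intros i _. rewrite (S_INR i). replace (a + (INR i + 1) * ((b - a) / INR (S N))) with (a + INR i * ((b - a) / INR (S N)) + (b - a) / INR (S N)) by ring. lra.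
  - intros i _. rewrite (S_INR i).
    replace (a + (INR i + 1) * ((b - a) / INR (S N)) - (a + INR i * ((b - a) / INR (S N))))
      with ((b - a) / INR (S N)) by ring.
    apply (Rmult_lt_reg_r (INR (S N))); [lra|].
    unfold Rdiv. rewrite Rmult_assoc, Rinv_l by lra. rewrite Rmult_1_r.
    rewrite S_INR.
    assert (Hdd : (b - a) = ((b - a) / d) * d) by (field; lra).
    rewrite Hdd at 1. destruct HN. nra.
Qed.

Lemma close_eq x y : (forall e, 0 < e -> Rabs (x - y) < e) -> x = y.
Proof.
  intros H. destruct (Req_dec x y) as [|Hne]; [assumption|].
  exfalso. assert (0 < Rabs (x - y)) by (apply Rabs_pos_lt; lra).
  specialize (H _ H0). lra.
Qed.

Lemma close_le x y : (forall e, 0 < e -> x < y + e) -> x <= y.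
Proof.
  intros H. destruct (Rle_dec x y) as [|Hn]; [assumption|].
  exfalso. specialize (H (x - y)). lra.
Qed.

Definition LS (Z c : R -> R) (p : nat -> R) k :=
  psum (fun i => Z (p i) * (c (p (S i)) - c (p i))) k.

Lemma Liu_0 Z c v : is_Liu_int Z c 0 v -> v = 0.
Proof. intros [[_ H]|[H _]]; [assumption|lra]. Qed.

Lemma Liu_unique Z c a v1 v2 : 0 <= a -> is_Liu_int Z c a v1 -> is_Liu_int Z c a v2 -> v1 = v2.
Proof.
  intros Ha [[H1 H2]|[H1 H2]] [[H3 H4]|[H3 H4]]; try lra.
  apply close_eq. intros e He.
  destruct (H2 (e/2)) as [d1 [Hd1 K1]]; [lra|].
  destruct (H4 (e/2)) as [d2 [Hd2 K2]]; [lra|].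
  destruct (part_exists 0 a (Rmin d1 d2)) as [k [p [Hk [H0 [Hka [Hinc Hm]]]]]]; [lra| apply Rmin_pos; lra|].
  specialize (K1 k p Hk H0 Hka Hinc). specialize (K2 k p Hk H0 Hka Hinc).
  assert (A1 := K1 (fun i Hi => Rlt_le_trans _ _ _ (Hm i Hi) (Rmin_l _ _))).
  assert (A2 := K2 (fun i Hi => Rlt_le_trans _ _ _ (Hm i Hi) (Rmin_r _ _))).
  set (S := psum _ k) in *.
  replace (v1 - v2) with ((S - v2) - (S - v1)) by ring.
  eapply Rle_lt_trans. apply Rabs_triang. rewrite Rabs_Ropp. lra.
Qed.

Lemma part_le a b k p d : part a b k p d -> forall i j, (i <= j <= k)%nat -> p i <= p j.
Proof.
  intros [_ [_ [_ [Hi _]]]] i j Hij.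
  induction j. replace i with O by lia; lra.
  destruct (Nat.eq_dec i (S j)). subst; lra.
  assert (p i <= p j) by (apply IHj; lia). assert (p j < p (S j)) by (apply Hi; lia). lra.
Qed.

Lemma part_lt a b k p d : part a b k p d -> forall i j, (i < j <= k)%nat -> p i < p j.
Proof.
  intros HP i j Hij. pose proof HP as HP0; destruct HP0 as [A [B [C [Hi E]]]].
  assert (p i < p (S i)) by (apply Hi; lia).
  assert (p (S i) <= p j) by (apply (part_le a b k p d HP); lia). lra.
Qed.

Definition pcat (k1 : nat) (p1 p2 : nat -> R) (i : nat) : R :=
  if (i <=? k1)%nat then p1 i else p2 (i - k1)%nat.

Lemma pcat_part a b c k1 p1 k2 p2 d :
  part a b k1 p1 d -> part b c k2 p2 d -> part a c (k1 + k2) (pcat k1 p1 p2) d.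
Proof.
  intros [A1 [B1 [C1 [D1 E1]]]] [A2 [B2 [C2 [D2 E2]]]].
  unfold pcat. repeat split.
  - lia.
  - simpl. assumption.
  - destruct (Nat.leb_spec (k1 + k2) k1). lia. replace (k1 + k2 - k1)%nat with k2 by lia. assumption.
  - intros i Hi. destruct (Nat.leb_spec i k1); destruct (Nat.leb_spec (S i) k1).
    + apply D1; lia.
    + replace i with k1 by lia. replace (S k1 - k1)%nat with 1%nat by lia. rewrite C1, <- B2. apply D2; lia.
    + lia.
    + replace (S i - k1)%nat with (S (i - k1)) by lia. apply D2; lia.
  - intros i Hi. destruct (Nat.leb_spec i k1); destruct (Nat.leb_spec (S i) k1).
    + apply E1; lia.
    + replace i with k1 by lia. replace (S k1 - k1)%nat with 1%nat by lia. rewrite C1, <- B2. apply E2; lia.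
    + lia.
    + replace (S i - k1)%nat with (S (i - k1)) by lia. apply E2; lia.
Qed.

Lemma pcat_LS Z c k1 p1 k2 p2 : p1 k1 = p2 O ->
  LS Z c (pcat k1 p1 p2) (k1 + k2) = LS Z c p1 k1 + LS Z c p2 k2.
Proof.
  intros Hj. unfold LS. rewrite psum_shift. f_equal.
  - apply psum_ext. intros i Hi. unfold pcat.
    destruct (Nat.leb_spec i k1); [|lia]. destruct (Nat.leb_spec (S i) k1); [|lia]. reflexivity.
  - apply psum_ext. intros i Hi. unfold pcat.
    destruct (Nat.leb_spec (k1 + i) k1); destruct (Nat.leb_spec (S (k1 + i)) k1); try lia.
    + replace i with O by lia. rewrite Nat.add_0_r. replace (S k1 - k1)%nat with 1%nat by lia.
      rewrite Hj. reflexivity.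
    + replace (k1 + i - k1)%nat with i by lia. replace (S (k1 + i) - k1)%nat with (S i) by lia. reflexivity.
Qed.

Lemma part_weaken a b k p d d' : part a b k p d -> d <= d' -> part a b k p d'.
Proof. intros [A [B [C [D E]]]] H. repeat split; auto. intros i Hi; specialize (E i Hi); lra. Qed.

Lemma Liu_part Z c a v : 0 < a -> is_Liu_int Z c a v ->
  forall e, 0 < e -> exists d, 0 < d /\ forall k p, part 0 a k p d -> Rabs (LS Z c p k - v) < e.
Proof.
  intros Ha [[H1 _]|[_ H]] e He; [lra|].
  destruct (H e He) as [d [Hd K]]. exists d; split; [assumption|].
  intros k p [A [B [C [D E]]]]. apply K; assumption.
Qed.

Lemma part_Liu Z c a v : 0 < a ->
  (forall e, 0 < e -> exists d, 0 < d /\ forall k p, part 0 a k p d -> Rabs (LS Z c p k - v) < e) ->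
  is_Liu_int Z c a v.
Proof.
  intros Ha H. right. split; [assumption|]. intros e He.
  destruct (H e He) as [d [Hd K]]. exists d; split; [assumption|].
  intros k p A B C D E. apply K. repeat split; assumption.
Qed.

Lemma SH Z c t V : 0 < t -> (forall u, 0 <= u <= t -> is_Liu_int Z c u (V u)) ->
  forall eta, 0 < eta -> exists d, 0 < d /\ forall k p, part 0 t k p d ->
    forall j, (j <= k)%nat -> Rabs (LS Z c p j - V (p j)) <= eta.
Proof.
  intros Ht HV eta Heta.
  destruct (Liu_part Z c t (V t) Ht (HV t ltac:(lra)) eta Heta) as [d [Hd Kt]].
  exists d. split; [assumption|]. intros k p HP j Hj.
  destruct (Nat.eq_dec j O) as [->|Hj0].
  { unfold LS; simpl. destruct HP as [_ [B _]]. rewrite B.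
    rewrite (Liu_0 Z c (V 0)) by (apply HV; lra). rewrite Rminus_0_r, Rabs_R0. lra. }
  destruct (Nat.eq_dec j k) as [->|Hjk].
  { pose proof HP as HP0; destruct HP0 as [A [B [C [D E]]]]. rewrite C. apply Rlt_le, Kt; assumption. }
  assert (Hu0 : 0 < p j). { pose proof HP as HP0; destruct HP0 as [_ [B _]]. rewrite <- B. apply (part_lt _ _ _ _ _ HP); lia. }
  assert (Hut : p j < t). { pose proof HP as HP0; destruct HP0 as [_ [_ [C _]]]. rewrite <- C. apply (part_lt _ _ _ _ _ HP); lia. }
  apply close_le. intros e He.
  set (u := p j) in *.
  destruct (Liu_part Z c u (V u) Hu0 (HV u ltac:(lra)) (e/2) ltac:(lra)) as [d1 [Hd1 K1]].
  destruct (Liu_part Z c t (V t) Ht (HV t ltac:(lra)) (e/2) ltac:(lra)) as [d2 [Hd2 K2]].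
  destruct (part_exists 0 u (Rmin d1 d2)) as [k1 [q1 HQ1]]; [lra|apply Rmin_pos; lra|].
  destruct (part_exists u t (Rmin d d2)) as [k2 [q2 HQ2]]; [lra|apply Rmin_pos; lra|].
  assert (A1 := K1 k1 q1 (part_weaken _ _ _ _ _ _ HQ1 (Rmin_l _ _))).
  assert (HQ12 : part 0 t (k1 + k2) (pcat k1 q1 q2) d2).
  { apply pcat_part with u. apply (part_weaken _ _ _ _ _ _ HQ1 (Rmin_r _ _)).
    apply (part_weaken _ _ _ _ _ _ HQ2 (Rmin_r _ _)). }
  assert (A2 := K2 _ _ HQ12).
  rewrite pcat_LS in A2 by (destruct HQ1 as [_ [_ [C _]]]; destruct HQ2 as [_ [B _]]; congruence).
  assert (HPj : part 0 u j p d).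
  { destruct HP as [A [B [C [D E]]]]. repeat split; auto; try lia; intros i Hi; [apply D|apply E]; lia. }
  assert (HP2 : part 0 t (j + k2) (pcat j p q2) d).
  { apply pcat_part with u. assumption. apply (part_weaken _ _ _ _ _ _ HQ2 (Rmin_l _ _)). }
  assert (A3 := Kt _ _ HP2).
  rewrite pcat_LS in A3 by (destruct HQ2 as [_ [B _]]; rewrite B; reflexivity).
  apply Rabs_def2 in A1. apply Rabs_def2 in A2. apply Rabs_def2 in A3.
  unfold Rabs. destruct (Rcase_abs (LS Z c p j - V u)); lra.
Qed.

Fixpoint mk (p xi : nat -> R) (i k : nat) : @SF_seq R :=
  match k with
  | O => SF_nil (p i)
  | S k' => SF_cons (p i, xi i) (mk p xi (S i) k')
  end.

Lemma mk_h p xi i k : SF_h (mk p xi i k) = p i.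
Proof. destruct k; reflexivity. Qed.

Lemma mk_sum f p xi i k :
  Riemann_sum f (mk p xi i k) = psum (fun l => f (xi (i + l)%nat) * (p (S (i + l)) - p (i + l)%nat)) k.
Proof.
  revert i. induction k; intros i.
  - simpl. reflexivity.
  - simpl mk. rewrite Riemann_sum_cons. rewrite IHk. rewrite psum_shift1. rewrite mk_h.
    simpl. rewrite Nat.add_0_r.
    replace (psum (fun l : nat => f (xi (S (i + l))) * (p (S (S (i + l))) - p (S (i + l)))) k)
      with (psum (fun l : nat => f (xi (i + S l)%nat) * (p (S (i + S l)) - p (i + S l)%nat)) k).
    2:{ apply psum_ext; intros; rewrite Nat.add_succ_r; reflexivity. }
    unfold plus, scal; simpl. unfold mult; simpl. ring.
Qed.

Lemma mk_lx_last p xi i k d : seq.last d (SF_lx (mk p xi i k)) = p (i + k)%nat.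
Proof.
  revert i d. induction k; intros i d.
  - simpl. rewrite Nat.add_0_r. reflexivity.
  - simpl mk. rewrite SF_lx_cons. change (seq.last (p i) (SF_lx (mk p xi (S i) k)) = p (i + S k)%nat).
    rewrite IHk. f_equal. lia.
Qed.

Lemma mk_size p xi i k : SF_size (mk p xi i k) = k.
Proof. revert i; induction k; intros i; [reflexivity|]. simpl mk. rewrite SF_size_cons, IHk. reflexivity. Qed.

Lemma mk_step p xi i k d : 0 < d -> (forall l, (l < k)%nat -> Rabs (p (S (i + l)) - p (i + l)%nat) < d) ->
  seq_step (SF_lx (mk p xi i k)) < d.
Proof.
  revert i. induction k; intros i Hd H.
  - simpl. unfold seq_step. simpl. lra.
  - simpl mk. rewrite SF_lx_cons.
    destruct k.
    + simpl. unfold seq_step. simpl. unfold Rmax. destruct (Rle_dec _ _).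
      lra. specialize (H O ltac:(lia)). rewrite Nat.add_0_r in H. exact H.
    + assert (IH := IHk (S i) Hd (fun l Hl => eq_ind _ (fun z => Rabs (p (S z) - p z) < d) (H (S l) ltac:(lia)) _ (Nat.add_succ_r i l))).
      simpl mk in IH |- *. rewrite SF_lx_cons in IH |- *.
      unfold seq_step in IH |- *. simpl in IH |- *.
      unfold Rmax at 1. destruct (Rle_dec _ _). exact IH.
      specialize (H O ltac:(lia)). rewrite Nat.add_0_r in H. exact H.
Qed.

Lemma mk_ptd p xi i k : (forall l, (l < k)%nat -> p (i + l)%nat <= xi (i + l)%nat <= p (S (i + l))) ->
  pointed_subdiv (mk p xi i k).
Proof.
  revert i. induction k; intros i H.
  - intros l Hl. rewrite mk_size in Hl. lia.
  - intros l Hl. rewrite mk_size in Hl. simpl mk. rewrite SF_lx_cons, SF_ly_cons.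
    destruct l.
    + simpl. rewrite mk_h. specialize (H O ltac:(lia)). rewrite Nat.add_0_r in H. exact H.
    + change (seq.nth 0 (SF_lx (mk p xi (S i) k)) l <= seq.nth 0 (SF_ly (mk p xi (S i) k)) l <= seq.nth 0 (SF_lx (mk p xi (S i) k)) (S l)).
      apply IHk. intros l' Hl'. replace (S i + l')%nat with (i + S l')%nat by lia. apply H. lia.
      rewrite mk_size. lia.
Qed.

Lemma RInt_part f t l : 0 < t -> is_RInt f 0 t l ->
  forall e, 0 < e -> exists d, 0 < d /\ forall k p xi, part 0 t k p d ->
    (forall i, (i < k)%nat -> p i <= xi i <= p (S i)) ->
    Rabs (psum (fun i => f (xi i) * (p (S i) - p i)) k - l) < e.
Proof.
  intros Ht H e He.
  unfold is_RInt in H. specialize (H _ (locally_ball l (mkposreal e He))).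
  destruct H as [d Hd]. exists d. split; [apply cond_pos|].
  intros k p xi HP Hxi.
  assert (HH := Hd (mk p xi O k)).
  destruct HP as [A [B [C [D E]]]].
  rewrite sign_eq_1 in HH by lra. rewrite mk_sum in HH.
  assert (Hs : seq_step (SF_lx (mk p xi O k)) < d).
  { apply mk_step. apply cond_pos. intros l0 Hl0. simpl. rewrite Rabs_pos_eq.
    apply E; assumption. specialize (D l0 Hl0). lra. }
  specialize (HH Hs).
  assert (Hc : pointed_subdiv (mk p xi 0 k) /\ SF_h (mk p xi 0 k) = Rmin 0 t /\
      seq.last (SF_h (mk p xi 0 k)) (SF_lx (mk p xi 0 k)) = Rmax 0 t).
  { split. apply mk_ptd. intros l0 Hl0. simpl. apply Hxi; assumption.
    rewrite mk_h, mk_lx_last, Rmin_left, Rmax_right by lra. simpl. split; assumption. }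
  specialize (HH Hc). simpl in HH. unfold ball in HH. simpl in HH. unfold AbsRing_ball in HH.
  unfold abs, minus, plus, opp, scal in HH; simpl in HH. unfold mult in HH; simpl in HH.
  rewrite Rmult_1_l in HH.
  replace (psum (fun i : nat => f (xi i) * (p (S i) - p i)) k - l) with
     (psum (fun l0 : nat => f (xi l0) * (p (S l0) - p l0)) k + - l) by ring.
  exact HH.
Qed.

Lemma up_ge1 r : 0 < r -> 1 <= IZR (up r).
Proof.
  intros Hr. destruct (archimed r) as [A _].
  assert (0 < up r)%Z by (apply lt_IZR; lra).
  apply IZR_le. lia.
Qed.

Lemma up_nat (r : R) (j : nat) : INR j < r < INR j + 1 -> IZR (up r) = INR j + 1.
Proof.
  intros H. rewrite <- (tech_up r (Z.of_nat (S j))).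
  - rewrite <- INR_IZR_INZ, S_INR. reflexivity.
  - rewrite <- INR_IZR_INZ, S_INR. lra.
  - rewrite <- INR_IZR_INZ, S_INR. lra.
Qed.

Definition psit (psi : R -> R) a b x := if Rlt_dec a x then if Rlt_dec x b then psi x else 0 else 0.
Definition dd a b (N : nat) := (b - a) / INR (S N).
Definition snap a b (N : nat) x := a + dd a b N * (IZR (up ((x - a) / dd a b N)) - 1).
Definition gN (q psi : R -> R) a b (N : nat) x := q (snap a b N x) * psit psi a b x.

Lemma dd_pos a b (Hab : a < b) N : 0 < dd a b N.
Proof. unfold dd. apply Rdiv_lt_0_compat. lra. apply lt_0_INR; lia. Qed.

Lemma g_piece q psi a b (Hab : a < b) (Hpsi : ex_RInt psi a b) N (j : nat) : (j < S N)%nat -> ex_RInt (gN q psi a b N) (a + INR j * dd a b N) (a + INR (S j) * dd a b N).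
Proof.
  intros Hj.
  assert (Hd := dd_pos a b Hab N).
  assert (Hb : a + INR (S j) * dd a b N <= b).
  { unfold dd. apply Rle_trans with (a + INR (S N) * ((b - a) / INR (S N))).
    apply Rplus_le_compat_l, Rmult_le_compat_r. apply Rlt_le, (dd_pos a b Hab N). apply le_INR; lia.
    right. field. apply not_0_INR; lia. }
  assert (Ha : a <= a + INR j * dd a b N) by (assert (0 <= INR j) by apply pos_INR; nra).
  assert (Hjj : a + INR j * dd a b N <= a + INR (S j) * dd a b N) by (rewrite S_INR; nra).
  apply ex_RInt_ext with (fun x => @scal R_AbsRing R_NormedModule (q (a + INR j * dd a b N)) (psi x)).
  - intros x Hx. rewrite Rmin_left, Rmax_right in Hx by lra.
    unfold gN, psit, snap. unfold scal; simpl; unfold mult; simpl.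
    destruct (Rlt_dec a x); [|lra]. destruct (Rlt_dec x b); [|lra].
    rewrite (up_nat _ j). f_equal. f_equal. ring.
    split.
    + apply (Rmult_lt_reg_r (dd a b N)); [lra|]. unfold Rdiv. rewrite Rmult_assoc, Rinv_l by lra. lra.
    + apply (Rmult_lt_reg_r (dd a b N)); [lra|]. unfold Rdiv. rewrite Rmult_assoc, Rinv_l by lra. rewrite S_INR in Hx. lra.
  - apply (@ex_RInt_scal R_NormedModule psi _ _ (q (a + INR j * dd a b N))). apply (@ex_RInt_Chasles_1 R_CompleteNormedModule psi _ _ b). lra.
    apply (@ex_RInt_Chasles_2 R_CompleteNormedModule psi a). lra. exact Hpsi.
Qed.

Lemma g_int q psi a b (Hab : a < b) (Hpsi : ex_RInt psi a b) N : ex_RInt (gN q psi a b N) a b.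
Proof.
  assert (H : forall j, (j <= S N)%nat -> ex_RInt (gN q psi a b N) a (a + INR j * dd a b N)).
  { induction j; intros Hj.
    - simpl. replace (a + 0 * dd a b N) with a by ring. apply ex_RInt_point.
    - apply ex_RInt_Chasles with (a + INR j * dd a b N). apply IHj; lia. apply g_piece; auto; lia. }
  specialize (H (S N) (Nat.le_refl _)).
  assert (Eb : a + INR (S N) * dd a b N = b). 2:{ rewrite Eb in H. exact H. }
  unfold dd. field. apply not_0_INR; lia.
Qed.

Lemma prod_int q psi a b Lq (Hab : a < b) (Hpsi : ex_RInt psi a b)
  (Hq : forall x y, a <= x <= b -> a <= y <= b -> Rabs (q x - q y) <= Lq * Rabs (x - y)) : ex_RInt (fun x => q x * psi x) a b.
Proof.
  destruct (ex_RInt_ub psi a b Hpsi) as [B HB].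
  rewrite Rmin_left, Rmax_right in HB by lra.
  set (T := fun x => q x * psit psi a b x).
  assert (Hlim : filterlim (gN q psi a b) eventually (@locally (fct_UniformSpace R R_UniformSpace) T)).
  { intros P [eps HP].
    set (K := (Rabs Lq + 1) * (Rabs B + 1) * (b - a)).
    assert (HK : 0 < K) by (unfold K; apply Rmult_lt_0_compat; [apply Rmult_lt_0_compat|]; try lra;
       pose proof (Rabs_pos Lq); pose proof (Rabs_pos B); lra).
    destruct (nfloor_ex (K / eps)) as [N0 HN0].
    { apply Rlt_le, Rdiv_lt_0_compat. lra. apply cond_pos. }
    exists N0. intros N HN. apply HP.
    unfold ball; simpl; unfold fct_ball; unfold ball; simpl; unfold AbsRing_ball.
    intros x. unfold abs, minus, plus, opp; simpl.
    unfold gN, T, psit.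
    destruct (Rlt_dec a x); [destruct (Rlt_dec x b)|].
    2,3: replace (q (snap a b N x) * 0 + - (q x * 0)) with 0 by ring; rewrite Rabs_R0; apply cond_pos.
    assert (Hd := dd_pos a b Hab N).
    set (rr := (x - a) / dd a b N).
    assert (Hr : 0 < rr) by (unfold rr; apply Rdiv_lt_0_compat; lra).
    destruct (archimed rr) as [A1 A2]. assert (A3 := up_ge1 rr Hr).
    assert (Hx : x = a + dd a b N * rr) by (unfold rr; field; lra).
    assert (Hs1 : a <= snap a b N x) by (unfold snap; fold rr; nra).
    assert (Hs2 : snap a b N x <= x) by (unfold snap; fold rr; nra).
    assert (Hs3 : x - snap a b N x < dd a b N) by (unfold snap; fold rr; nra).
    assert (Hqq := Hq (snap a b N x) x ltac:(lra) ltac:(lra)).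
    assert (Hps := HB x ltac:(lra)). change (norm (psi x)) with (Rabs (psi x)) in Hps.
    replace (q (snap a b N x) * psi x + - (q x * psi x)) with ((q (snap a b N x) - q x) * psi x) by ring.
    rewrite Rabs_mult.
    apply Rle_lt_trans with ((Rabs Lq + 1) * dd a b N * (Rabs B + 1)).
    + apply Rmult_le_compat; try apply Rabs_pos.
      * apply Rle_trans with (Lq * Rabs (snap a b N x - x)). exact Hqq.
        rewrite Rabs_minus_sym, Rabs_pos_eq by lra.
        apply Rle_trans with (Rabs Lq * (x - snap a b N x)). apply Rmult_le_compat_r. lra. apply Rle_abs.
        apply Rmult_le_compat; try lra. apply Rabs_pos.
      * pose proof (Rabs_pos B). apply Rle_trans with B. lra. apply Rle_trans with (Rabs B). apply Rle_abs. lra.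
    + unfold dd. 
      assert (HSN : INR N0 + 1 <= INR (S N)) by (rewrite S_INR; apply Rplus_le_compat_r, le_INR; lia).
      assert (Hep := cond_pos eps).
      replace ((Rabs Lq + 1) * ((b - a) / INR (S N)) * (Rabs B + 1)) with (K / INR (S N))
        by (unfold K; field; apply not_0_INR; lia).
      apply (Rmult_lt_reg_r (INR (S N))). apply lt_0_INR; lia.
      unfold Rdiv. rewrite Rmult_assoc, Rinv_l, Rmult_1_r by (apply not_0_INR; lia).
      destruct HN0 as [_ HN0].
      assert (K < eps * (INR N0 + 1)).
      { apply (Rmult_lt_reg_r (/ eps)). apply Rinv_0_lt_compat; lra.
        replace (eps * (INR N0 + 1) * / eps) with (INR N0 + 1) by (field; lra). exact HN0. }
      nra. }
  destruct (@filterlim_RInt nat R_CompleteNormedModule (gN q psi a b) a b eventually eventually_filter T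
             (fun N => RInt (gN q psi a b N) a b) (fun N => RInt_correct _ _ _ (g_int q psi a b Hab Hpsi N)) Hlim) as [If [_ HIf]].
  exists If. apply is_RInt_ext with T; [|exact HIf].
  intros x Hx. rewrite Rmin_left, Rmax_right in Hx by lra. unfold T, psit.
  destruct (Rlt_dec a x); [|lra]. destruct (Rlt_dec x b); [|lra]. reflexivity.
Qed.



Lemma ex_RInt_mult_lip (q psi : R -> R) a b Lq : a < b -> ex_RInt psi a b ->
  (forall x y, a <= x <= b -> a <= y <= b -> Rabs (q x - q y) <= Lq * Rabs (x - y)) ->
  ex_RInt (fun x => q x * psi x) a b.
Proof. intros. apply (prod_int q psi a b Lq); assumption. Qed.

Lemma pow_lip m T : 0 <= T -> exists L, 0 <= L /\ forall x y, 0 <= x <= T -> 0 <= y <= T ->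
  Rabs (x ^ m - y ^ m) <= L * Rabs (x - y).
Proof.
  intros HT. induction m.
  - exists 0. split; [lra|]. intros. simpl. replace (1 - 1) with 0 by ring. rewrite Rabs_R0. lra.
  - destruct IHm as [L [HL H]]. exists (T * L + T ^ m). split.
    { assert (0 <= T ^ m) by (apply pow_le; lra). nra. }
    intros x y Hx Hy. simpl.
    replace (x * x ^ m - y * y ^ m) with (x * (x ^ m - y ^ m) + y ^ m * (x - y)) by ring.
    eapply Rle_trans. apply Rabs_triang. rewrite !Rabs_mult.
    specialize (H x y Hx Hy).
    assert (Rabs x <= T) by (rewrite Rabs_pos_eq; lra).
    assert (Rabs (y ^ m) <= T ^ m) by (rewrite Rabs_pos_eq by (apply pow_le; lra); apply pow_incr; lra).
    assert (0 <= Rabs (x - y)) by apply Rabs_pos.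
    assert (0 <= Rabs (x ^ m - y ^ m)) by apply Rabs_pos.
    assert (0 <= Rabs x) by apply Rabs_pos.
    nra.
Qed.

Lemma pow_pred_mul m u : INR m * (u * u ^ pred m) = INR m * u ^ m.
Proof. destruct m. simpl. ring. simpl. ring. Qed.

Lemma pow_taylor m T : 0 <= T -> exists K, 0 <= K /\ forall u d, 0 <= u -> 0 <= d -> u + d <= T ->
  Rabs ((u + d) ^ m - u ^ m - INR m * u ^ pred m * d) <= K * d ^ 2.
Proof.
  intros HT. induction m.
  - exists 0. split; [lra|]. intros. simpl. replace (1 - 1 - 0 * 1 * d) with 0 by ring. rewrite Rabs_R0. lra.
  - destruct IHm as [K [HK H]]. exists (T * K + INR m * T ^ pred m). split.
    { assert (0 <= T ^ pred m) by (apply pow_le; lra). assert (0 <= INR m) by apply pos_INR. nra. }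
    intros u d Hu Hd Hud.
    replace ((u + d) ^ S m - u ^ S m - INR (S m) * u ^ pred (S m) * d) with
      ((u + d) * ((u + d) ^ m - u ^ m - INR m * u ^ pred m * d) + INR m * u ^ pred m * d ^ 2).
    2:{ simpl pred. rewrite S_INR. simpl. assert (E := pow_pred_mul m u).
        apply Rminus_diag_uniq.
        first [ transitivity (d * (INR m * (u * u ^ pred m) - INR m * u ^ m)); [ring| rewrite E; ring]
              | transitivity (- d * (INR m * (u * u ^ pred m) - INR m * u ^ m)); [ring| rewrite E; ring] ]. }
    eapply Rle_trans. apply Rabs_triang. rewrite !Rabs_mult.
    specialize (H u d Hu Hd Hud).
    assert (Rabs (u + d) <= T) by (rewrite Rabs_pos_eq; lra).
    assert (Rabs (INR m) = INR m) by (apply Rabs_pos_eq, pos_INR).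
    assert (Rabs (u ^ pred m) <= T ^ pred m) by (rewrite Rabs_pos_eq by (apply pow_le; lra); apply pow_incr; lra).
    assert (Rabs (d ^ 2) = d ^ 2) by (apply Rabs_pos_eq; nra).
    assert (0 <= Rabs ((u + d) ^ m - u ^ m - INR m * u ^ pred m * d)) by apply Rabs_pos.
    assert (0 <= d ^ 2) by nra. assert (0 <= INR m) by apply pos_INR.
    assert (0 <= Rabs (u ^ pred m)) by apply Rabs_pos.
    rewrite H1, H3.
    assert (Rabs (u + d) * Rabs ((u + d) ^ m - u ^ m - INR m * u ^ pred m * d) <= T * (K * d ^ 2)).
    { apply Rmult_le_compat; try lra; apply Rabs_pos. }
    assert (INR m * Rabs (u ^ pred m) * d ^ 2 <= INR m * T ^ pred m * d ^ 2).
    { apply Rmult_le_compat_r; [lra|]. apply Rmult_le_compat_l; lra. }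
    nra.
Qed.

Lemma LiuKey Z c t V m Iv : 0 < t -> (1 <= m)%nat ->
  (forall u, 0 <= u <= t -> is_Liu_int Z c u (V u)) -> ex_RInt V 0 t ->
  is_RInt (fun s => (t - s) ^ pred m * V s) 0 t Iv ->
  is_Liu_int (fun s => (t - s) ^ m * Z s) c t (INR m * Iv).
Proof.
  intros Ht Hm HV HVi HI.
  apply part_Liu; [assumption|]. intros e He.
  destruct (ex_RInt_ub V 0 t HVi) as [B0 HB0].
  rewrite Rmin_left, Rmax_right in HB0 by lra.
  set (B := Rabs B0 + 1).
  assert (HB : forall x, 0 <= x <= t -> Rabs (V x) <= B).
  { intros x Hx. specialize (HB0 x Hx). change (norm (V x)) with (Rabs (V x)) in HB0.
    unfold B. pose proof (Rle_abs B0). lra. }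
  assert (HBp : 0 < B) by (unfold B; pose proof (Rabs_pos B0); lra).
  destruct (pow_lip m t ltac:(lra)) as [L0 [HL0 HL]].
  set (Lh := L0 + 1). assert (HLh : 0 < Lh) by (unfold Lh; lra).
  destruct (pow_taylor m t ltac:(lra)) as [K0 [HK0 HK]].
  set (K := K0 + 1). assert (HKp : 0 < K) by (unfold K; lra).
  assert (Hmp : 0 < INR m) by (apply lt_0_INR; lia).
  set (eta := e / (3 * Lh * t)).
  assert (Heta : 0 < eta) by (unfold eta; apply Rdiv_lt_0_compat; [lra| apply Rmult_lt_0_compat; lra]).
  destruct (RInt_part _ t Iv Ht HI (e / (3 * INR m))) as [d1 [Hd1 K1]].
  { apply Rdiv_lt_0_compat; lra. }
  destruct (SH Z c t V Ht HV eta Heta) as [d2 [Hd2 K2]].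
  set (d3 := e / (3 * K * B * t)).
  assert (Hd3 : 0 < d3) by (unfold d3; apply Rdiv_lt_0_compat; [lra|]; repeat apply Rmult_lt_0_compat; lra).
  exists (Rmin d1 (Rmin d2 d3)). split.
  { repeat apply Rmin_pos; lra. }
  intros k p HP.
  assert (HP1 := part_weaken _ _ _ _ _ _ HP (Rmin_l _ _)).
  assert (HP2 := part_weaken _ _ _ _ _ _ HP (Rle_trans _ _ _ (Rmin_r _ _) (Rmin_l _ _))).
  assert (HP3 := part_weaken _ _ _ _ _ _ HP (Rle_trans _ _ _ (Rmin_r _ _) (Rmin_r _ _))).
  pose proof HP as HP0. destruct HP0 as [Hk [Hp0 [Hpk [Hinc Hmesh]]]].
  assert (Hrange : forall i, (i <= k)%nat -> 0 <= p i <= t).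
  { intros i Hi. split. rewrite <- Hp0. apply (part_le _ _ _ _ _ HP). lia.
    rewrite <- Hpk. apply (part_le _ _ _ _ _ HP). lia. }
  set (hh := fun i => (t - p i) ^ m).
  set (a := fun i => Z (p i) * (c (p (S i)) - c (p i))).
  set (A := fun j => psum a j).
  set (D := fun i => p (S i) - p i).
  assert (E1 : LS (fun s => (t - s) ^ m * Z s) c p k = psum (fun i => hh i * a i) k).
  { unfold LS. apply psum_ext. intros i _. unfold hh, a. ring. }
  rewrite E1, abel.
  assert (Hhk : hh k = 0). { unfold hh. rewrite Hpk. replace (t - t) with 0 by ring. apply pow_i. lia. }
  rewrite Hhk, Rmult_0_l, Rminus_0_l.
  set (T1 := psum (fun i => (hh i - hh (S i)) * (A (S i) - V (p (S i)))) k).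
  set (T2 := psum (fun i => ((hh i - hh (S i)) - INR m * (t - p (S i)) ^ pred m * D i) * V (p (S i))) k).
  set (T3 := psum (fun i => (t - p (S i)) ^ pred m * V (p (S i)) * (p (S i) - p i)) k).
  assert (Ecomb : psum (fun i => (hh (S i) - hh i) * psum a (S i)) k = -1 * (T1 + T2 + INR m * T3)).
  { unfold T1, T2, T3. rewrite <- (psum_scal _ (INR m)). rewrite <- psum_plus. rewrite <- psum_plus.
    rewrite <- psum_scal. apply psum_ext. intros i _. unfold A, D. ring. }
  assert (Edec : - psum (fun i => (hh (S i) - hh i) * psum a (S i)) k - INR m * Iv
     = T1 + T2 + INR m * (T3 - Iv)) by (rewrite Ecomb; ring).
  unfold LS in *. rewrite Edec.
  assert (B1 : Rabs T1 <= e / 3).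
  { unfold T1. eapply Rle_trans. apply psum_abs.
    apply Rle_trans with (psum (fun i => Lh * eta * D i) k).
    - apply psum_le. intros i Hi. rewrite Rabs_mult.
      assert (X1 : Rabs (hh i - hh (S i)) <= Lh * D i).
      { unfold hh, D. eapply Rle_trans. apply HL; [pose proof (Hrange i ltac:(lia))|pose proof (Hrange (S i) ltac:(lia))]; lra.
        replace (t - p i - (t - p (S i))) with (p (S i) - p i) by ring.
        rewrite Rabs_pos_eq by (specialize (Hinc i Hi); lra). unfold Lh.
        specialize (Hinc i Hi). nra. }
      assert (X2 : Rabs (A (S i) - V (p (S i))) <= eta).
      { exact (K2 k p HP2 (S i) ltac:(lia)). }
      assert (0 <= D i) by (unfold D; specialize (Hinc i Hi); lra).
      assert (0 <= Rabs (hh i - hh (S i))) by apply Rabs_pos.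
      assert (0 <= Rabs (A (S i) - V (p (S i)))) by apply Rabs_pos.
      nra.
    - rewrite psum_scal. unfold D. rewrite psum_tele, Hpk, Hp0. unfold eta.
      right. field. lra. }
  assert (B2 : Rabs T2 <= e / 3).
  { unfold T2. eapply Rle_trans. apply psum_abs.
    apply Rle_trans with (psum (fun i => K * d3 * B * D i) k).
    - apply psum_le. intros i Hi. rewrite Rabs_mult.
      assert (Hi1 := Hinc i Hi). assert (Hi2 := Hrange i ltac:(lia)). assert (Hi3 := Hrange (S i) ltac:(lia)).
      assert (HDi : D i < d3) by (destruct HP3 as [_ [_ [_ [_ M]]]]; apply M; assumption).
      assert (X1 : Rabs (hh i - hh (S i) - INR m * (t - p (S i)) ^ pred m * D i) <= K * d3 * D i).
      { unfold hh, D. replace (t - p i) with ((t - p (S i)) + (p (S i) - p i)) by ring.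
        eapply Rle_trans. apply HK; lra.
        unfold D in HDi. unfold K. simpl. rewrite Rmult_1_r.
        assert (K0 * ((p (S i) - p i) * (p (S i) - p i)) <= K0 * (d3 * (p (S i) - p i))).
        { apply Rmult_le_compat_l. lra. apply Rmult_le_compat_r; lra. }
        assert (0 <= d3 * (p (S i) - p i)) by (apply Rmult_le_pos; lra).
        replace ((K0 + 1) * d3 * (p (S i) - p i)) with (K0 * (d3 * (p (S i) - p i)) + d3 * (p (S i) - p i)) by ring.
        lra. }
      assert (X2 := HB (p (S i)) Hi3).
      assert (0 <= Rabs (V (p (S i)))) by apply Rabs_pos.
      assert (0 <= Rabs (hh i - hh (S i) - INR m * (t - p (S i)) ^ pred m * D i)) by apply Rabs_pos.
      assert (0 <= D i) by (unfold D; lra).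
      assert (0 <= K * d3 * D i) by (apply Rmult_le_pos; [apply Rmult_le_pos|]; lra).
      apply Rle_trans with ((K * d3 * D i) * B). apply Rmult_le_compat; assumption. right; ring.
    - rewrite psum_scal. unfold D. rewrite psum_tele, Hpk, Hp0. unfold d3.
      right. field. repeat split; lra. }
  assert (B3 : Rabs (INR m * (T3 - Iv)) < e / 3).
  { rewrite Rabs_mult, Rabs_pos_eq by lra.
    assert (X := K1 k p (fun i => p (S i)) HP1 (fun i Hi => conj (Rlt_le _ _ (Hinc i Hi)) (Rle_refl _))).
    unfold T3.
    apply (Rmult_lt_reg_l (/ INR m)). apply Rinv_0_lt_compat; lra.
    rewrite <- Rmult_assoc, Rinv_l, Rmult_1_l by lra.
    replace (/ INR m * (e / 3)) with (e / (3 * INR m)) by (field; lra). exact X. }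
  apply Rle_lt_trans with (Rabs T1 + Rabs T2 + Rabs (INR m * (T3 - Iv))).
  { eapply Rle_trans. apply Rabs_triang. apply Rplus_le_compat_r. apply Rabs_triang. }
  lra.
Qed.

Lemma RInt_uniqR (f : R -> R) a b (l : R) : is_RInt f a b l -> RInt f a b = l.
Proof. exact (@is_RInt_unique R_CompleteNormedModule f a b l). Qed.
Lemma RInt_correctR (f : R -> R) a b : ex_RInt f a b -> is_RInt f a b (RInt f a b).
Proof. exact (@RInt_correct R_CompleteNormedModule f a b). Qed.
Lemma RInt_pointR (f : R -> R) a : RInt f a a = 0.
Proof. exact (@RInt_point R_CompleteNormedModule a f). Qed.

Lemma iter_base P m : forall t v, 0 <= t -> iter_int P m t v -> exists y, P t y.
Proof.
  induction m; intros t v Ht H.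
  - exists v; exact H.
  - destruct H as [G [HG _]]. apply (IHm t (G t) Ht). apply HG; lra.
Qed.

Lemma iter_all P m t v : 0 <= t -> iter_int P (S m) t v -> forall u, 0 <= u <= t -> exists y, P u y.
Proof.
  intros Ht [G [HG _]] u Hu. apply (iter_base P m u (G u)). lra. apply HG; assumption.
Qed.

Lemma iter_zero P m v : (forall y, P 0 y -> y = 0) -> iter_int P m 0 v -> v = 0.
Proof.
  intros HP H. destruct m.
  - apply HP; exact H.
  - destruct H as [G [_ HG]]. apply RInt_uniqR in HG. rewrite RInt_pointR in HG. rewrite <- HG. reflexivity.
Qed.

Lemma iter_reduce (P : R -> R -> Prop) V t :
  (forall u y, 0 <= u <= t -> P u y -> y = V u) ->
  forall m s v, 0 <= s <= t -> iter_int P (S m) s v -> iter_int (fun s v => is_RInt V 0 s v) m s v.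
Proof.
  intros HU m. induction m; intros s v Hs H.
  - destruct H as [G [HG HI]]. simpl. apply is_RInt_ext with G; [|exact HI].
    intros x Hx. rewrite Rmin_left, Rmax_right in Hx by lra. apply HU. lra. apply HG. lra.
  - destruct H as [G [HG HI]]. exists G. split; [|exact HI].
    intros r Hr. apply IHm. lra. apply HG. exact Hr.
Qed.

Lemma RInt_Liu f a l : 0 < a -> is_RInt f 0 a l -> is_Liu_int f (fun r => r) a l.
Proof.
  intros Ha H. apply part_Liu; [exact Ha|]. intros e He.
  destruct (RInt_part f a l Ha H e He) as [d [Hd K]]. exists d. split; [exact Hd|].
  intros k p HP. apply (K k p p HP). intros i Hi. destruct HP as [_ [_ [_ [D _]]]].
  specialize (D i Hi). lra.
Qed.

Lemma RInt_Liu' f a : 0 <= a -> ex_RInt f 0 a -> is_Liu_int f (fun r => r) a (RInt f 0 a).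
Proof.
  intros Ha H. destruct (Req_dec a 0) as [->|Hne].
  - left. split; [reflexivity|]. apply RInt_pointR.
  - apply RInt_Liu. lra. apply RInt_correctR. exact H.
Qed.

Lemma fact_S_INR m v : INR (S m) * (INR (fact m) * v) = INR (fact (S m)) * v.
Proof. rewrite fact_simpl, mult_INR. ring. Qed.

Lemma RC m : forall phi t v, 0 <= t -> iter_int (fun s v => is_RInt phi 0 s v) m t v ->
  is_RInt (fun s => (t - s) ^ m * phi s) 0 t (INR (fact m) * v).
Proof.
  induction m; intros phi t v Ht H.
  - simpl in H |- *. replace (1 * v) with v by ring.
    apply is_RInt_ext with phi; [|exact H]. intros; symmetry; apply Rmult_1_l.
  - destruct (Req_dec t 0) as [->|Htn].
    + rewrite (iter_zero _ _ v) with (1 := fun y Hy => eq_sym (eq_trans (eq_sym (RInt_pointR phi 0)) (RInt_uniqR _ _ _ _ Hy))) (2 := H).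
      rewrite Rmult_0_r. exact (@is_RInt_point R_NormedModule _ 0).
    + assert (Htp : 0 < t) by lra.
      set (Phi := fun u => RInt phi 0 u).
      assert (HPhi : forall u, 0 <= u <= t -> is_RInt phi 0 u (Phi u)).
      { intros u Hu. destruct (iter_all _ _ _ _ Ht H u Hu) as [y Hy].
        unfold Phi. rewrite (RInt_uniqR _ _ _ _ Hy). exact Hy. }
      assert (Hred := iter_reduce _ Phi t (fun u y Hu Hy => eq_sym (RInt_uniqR _ _ _ _ Hy)) m t v ltac:(lra) H).
      assert (IH := IHm Phi t v Ht Hred).
      destruct (iter_base _ _ _ _ Ht Hred) as [y Hy].
      assert (HL : is_Liu_int (fun s => (t - s) ^ S m * phi s) (fun r => r) t (INR (S m) * (INR (fact m) * v))).
      { apply LiuKey with Phi; try assumption; try lia.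
        - intros u Hu. unfold Phi. apply RInt_Liu'. lra. exists (Phi u). apply HPhi; exact Hu.
        - exists y; exact Hy. }
      rewrite fact_S_INR in HL.
      assert (Hex : ex_RInt (fun s => (t - s) ^ S m * phi s) 0 t).
      { destruct (pow_lip (S m) t Ht) as [Lq [_ HLq]].
        apply ex_RInt_mult_lip with Lq. exact Htp. exists (Phi t). apply HPhi; lra.
        intros x z Hx Hz. replace (x - z) with (- ((t - x) - (t - z))) by ring. rewrite Rabs_Ropp.
        apply HLq; lra. }
      assert (HL2 := RInt_Liu _ _ _ Htp (RInt_correctR _ _ _ Hex)).
      rewrite <- (Liu_unique _ _ _ _ _ Ht HL2 HL). apply RInt_correctR. exact Hex.
Qed.

Lemma LC m : forall Z c t v, 0 <= t -> iter_int (fun s v => is_Liu_int Z c s v) m t v ->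
  is_Liu_int (fun s => (t - s) ^ m * Z s) c t (INR (fact m) * v).
Proof.
  intros Z c t v Ht H. destruct m.
  - simpl in H |- *. replace (1 * v) with v by ring.
    replace (fun s => 1 * Z s) with Z; [exact H|]. apply functional_extensionality. intros; ring.
  - destruct (Req_dec t 0) as [->|Htn].
    + rewrite (iter_zero _ _ v) with (1 := Liu_0 Z c) (2 := H). left. split; [reflexivity|ring].
    + assert (Htp : 0 < t) by lra.
      set (V := fun u => epsilon (inhabits 0) (fun y => is_Liu_int Z c u y)).
      assert (HV : forall u, 0 <= u <= t -> is_Liu_int Z c u (V u)).
      { intros u Hu. unfold V. apply epsilon_spec. apply (iter_all _ _ _ _ Ht H u Hu). }
      assert (Hred := iter_reduce _ V t (fun u y Hu Hy => Liu_unique Z c u y (V u) ltac:(lra) Hy (HV u Hu)) m t v ltac:(lra) H).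
      assert (IH := RC m V t v Ht Hred).
      destruct (iter_base _ _ _ _ Ht Hred) as [y Hy].
      rewrite <- fact_S_INR.
      apply LiuKey with V; try assumption; try lia.
      exists y; exact Hy.
Qed.

Theorem lemma3p1 (Gamma : Type) (L : (Gamma -> Prop) -> Prop)
  (M : (Gamma -> Prop) -> R) (HGamma : inhabited Gamma)
  (HU : uncertainty_space L M)
  (n : nat) (Hn : (1 <= n)%nat)
  (C : R -> Gamma -> R) (HC : liu_process L M C)
  (f g : R -> (nat -> R) -> R)
  (Hfd : depends_on_first n f) (Hgd : depends_on_first n g)
  (Hfc : continuous_on_Rn n f) (Hgc : continuous_on_Rn n g)
  (X0 : nat -> R) (X : R -> Gamma -> R) (D : nat -> R -> Gamma -> R)
  (Hsol : is_solution L M n f g C X0 X D) :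
  exists Lam, L Lam /\ M Lam = 1 /\
    forall w, Lam w -> forall t, 0 <= t ->
      exists J I,
        is_RInt (fun s => (t - s) ^ (n - 1) * f s (fun k => D k s w)) 0 t J /\
        is_Liu_int (fun s => (t - s) ^ (n - 1) * g s (fun k => D k s w))
                   (fun s => C s w) t I /\
        X t w = psum (fun k => t ^ k / INR (fact k) * X0 k) n
                + / INR (fact (n - 1)) * J + / INR (fact (n - 1)) * I.
Proof.
  destruct Hsol as [_ [_ [Lam [HL [HM Hw]]]]].
  exists Lam. split; [exact HL|]. split; [exact HM|].
  intros w Hlw t Ht. destruct (Hw w Hlw) as [_ [_ H3]].
  destruct (H3 t Ht) as [vf [vg [Hf [Hg HX]]]].
  exists (INR (fact (n - 1)) * vf), (INR (fact (n - 1)) * vg).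
  split; [exact (RC (n - 1) (fun r => f r (fun k => D k r w)) t vf Ht Hf)|].
  split; [exact (LC (n - 1) (fun r => g r (fun k => D k r w)) (fun r => C r w) t vg Ht Hg)|].
  rewrite HX. rewrite <- !Rmult_assoc, Rinv_l, !Rmult_1_l by apply INR_fact_neq_0. reflexivity.
Qed.
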